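(* Let $\mathcal A$ be a $p$-S-ring over a finite $p$-group $H$, let $K\le H$ be an $\mathcal A$-subgroup of index $p$, and let $T\in\mathrm{Bs}(\mathcal A)$. Then: (i) $T$ is contained in a single coset of $K$; in particular $\mathrm{rad}(T)\le K$. (ii) If $L\le H$ is an $\mathcal A$-subgroup of order $p$ with $L\trianglelefteq H$ and $L\not\le\mathrm{rad}(T)$, then $hL\cap T=Lh\cap T=\{h\}$ for every $h\in T$. (iii) If $H$ is abelian and $|O(\mathcal A)\cap K|\cdot|T|>|H|/p$, then $O(\mathcal A)\cap\mathrm{rad}(T)\ne\{1\}$.
   Context: An S-ring over $H$ is a subalgebra $\mathcal A\subseteq\mathbb{Q}H$ spanned by $\underline{T}=\sum_{t\in T}t$ for $T$ in a partition $\mathrm{Bs}(\mathcal A)$ of $H$ (basic sets) with $\{1\}\in\mathrm{Bs}(\mathcal A)$ and $T^{-1}\in\mathrm{Bs}(\mathcal A)$ for all $T$. A subgroup $K$ is an $\mathcal A$-subgroup if $\underline K\in\mathcal A$. $\mathrm{rad}(S)=\{h\in H:hS=Sh=S\}$. The thin radical is $O(\mathcal A)=\{h\in H:\{h\}\in\mathrm{Bs}(\mathcal A)\}$. $\mathcal A$ is a $p$-S-ring if $H$ is a $p$-group and every basic set has $p$-power size. *)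

(* Defs.v *)
From mathcomp Require Import all_boot all_fingroup all_solvable.
Set Implicit Arguments. Unset Strict Implicit. Unset Printing Implicit Defensive.
Local Open Scope group_scope.

Definition set_inv (gT : finGroupType) (T : {set gT}) : {set gT} :=
  [set x^-1 | x in T].

(* Coefficient of x in the group-algebra product (sum T)(sum S). *)
Definition prod_coef (gT : finGroupType) (T S : {set gT}) (x : gT) : nat :=
  #|[set ts : gT * gT | [&& ts.1 \in T, ts.2 \in S & ts.1 * ts.2 == x]]|.

(* P is the set of basic sets of an S-ring over H:
   a partition of H, {1} is basic, closed under inversion, and the
   Q-span of the sums of basic sets is closed under multiplication
   (i.e. the coefficients of each product of basic-set sums are constant
   on every basic set).  The span contains 1 = sum {1}. *)
Definition is_Sring (gT : finGroupType) (H : {set gT}) (P : {set {set gT}}) :=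
  [/\ partition P H,
      [set 1] \in P,
      forall T, T \in P -> set_inv T \in P &
      forall T S U x y, T \in P -> S \in P -> U \in P -> x \in U -> y \in U ->
        prod_coef T S x = prod_coef T S y].

Definition is_pSring (p : nat) (gT : finGroupType) (H : {set gT})
    (P : {set {set gT}}) :=
  [/\ prime p, p.-group H, is_Sring H P & forall T, T \in P -> p.-nat #|T|].

(* K is an A-subgroup: sum K lies in the S-ring, i.e. K is a union of
   basic sets. *)
Definition is_Asubgroup (gT : finGroupType) (P : {set {set gT}}) (K : {set gT}) :=
  K = cover [set T in P | T \subset K].

Definition rad (gT : finGroupType) (H S : {set gT}) : {set gT} :=
  [set h in H | (h *: S == S) && (S :* h == S)].

Definition thin_rad (gT : finGroupType) (H : {set gT}) (P : {set {set gT}}) :=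
  [set h in H | [set h] \in P].

(* Main.v *)
Require Import Defs.
From mathcomp Require Import all_boot all_fingroup all_solvable.
Set Implicit Arguments. Unset Strict Implicit. Unset Printing Implicit Defensive.
Local Open Scope group_scope.

Section Aux.
Variables (gT : finGroupType) (H : {group gT}) (P : {set {set gT}}).
Hypothesis sr : is_Sring H P.

Lemma sr_part : partition P H. Proof. by case: sr. Qed.
Lemma sr_triv : trivIset P. Proof. by case/and3P: sr_part. Qed.
Lemma sr_sub (S : {set gT}) : S \in P -> S \subset H.
Proof. case/and3P: sr_part => /eqP <- _ _ SP; exact: bigcup_sup SP. Qed.
Lemma sr_n0 (S : {set gT}) : S \in P -> S != set0.
Proof. case/and3P: sr_part => _ _ n0 SP; apply/eqP => E; by rewrite -E SP in n0. Qed.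
Lemma sr_same (S U : {set gT}) (z : gT) : S \in P -> U \in P -> z \in S -> z \in U -> S = U.
Proof.
move=> SP UP zS zU.
by rewrite -(def_pblock sr_triv SP zS) (def_pblock sr_triv UP zU).
Qed.

Lemma card_sum (A : {set gT}) (Q : pred gT) :
  #|[set t in A | Q t]| = \sum_(t in A) (Q t : nat).
Proof.
rewrite -sum1_card [RHS]big_mkcond /= [LHS]big_mkcond /=.
apply: eq_bigr => t _; rewrite !inE; by case: (t \in A); case: (Q t).
Qed.

Lemma coefE (T S : {set gT}) (x : gT) : prod_coef T S x = #|[set t in T | t^-1 * x \in S]|.
Proof.
rewrite /prod_coef.
have -> : [set ts : gT * gT | [&& ts.1 \in T, ts.2 \in S & ts.1 * ts.2 == x]]
   = (fun t => (t, t^-1 * x)) @: [set t in T | t^-1 * x \in S].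
  apply/setP => [[a b]]; rewrite !inE /=; apply/idP/imsetP.
  - case/and3P => aT bS /eqP ab; exists a; first by rewrite inE aT -ab mulKg.
    by rewrite -ab mulKg.
  - case=> t; rewrite inE => /andP[tT tS] [-> ->].
    by rewrite tT tS mulKVg eqxx.
rewrite card_imset // => t1 t2 [] //.
Qed.

Lemma cover_sum (Q : {set {set gT}}) z : trivIset Q ->
  (z \in cover Q : nat) = \sum_(S in Q) (z \in S : nat).
Proof.
move=> tQ; case: (boolP (z \in cover Q)) => zin.
- have BQ := pblock_mem zin.
  rewrite (bigD1 (pblock Q z)) //= mem_pblock zin big1 // => S /andP[SQ SB].
  apply/eqP; rewrite eqb0; apply/negP => zS.
  by rewrite (def_pblock tQ SQ zS) eqxx in SB.
- rewrite big1 // => S SQ; apply/eqP; rewrite eqb0; apply/negP => zS.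
  move/negP: zin; apply; rewrite /cover; apply/bigcupP; by exists S.
Qed.

Lemma coefK (K T : {set gT}) (x y : gT) : is_Asubgroup P K -> T \in P -> x \in T -> y \in T ->
  #|[set t in T | t^-1 * x \in K]| = #|[set t in T | t^-1 * y \in K]|.
Proof.
move=> HK TP xT yT.
set PK := [set S in P | S \subset K].
have tK : trivIset PK by apply: trivIsetS sr_triv; apply/subsetP => S; rewrite inE => /andP[].
suff E: forall z, #|[set t in T | t^-1 * z \in K]| = \sum_(S in PK) prod_coef T S z.
  rewrite !E; apply: eq_bigr => S; rewrite inE => /andP[SP _].
  have [_ _ _ C] := sr; exact: (C _ _ _ _ _ TP SP TP xT yT).
move=> z; rewrite card_sum.
transitivity (\sum_(t in T) \sum_(S in PK) ((t^-1 * z)%g \in S : nat)).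
  apply: eq_bigr => t _; by rewrite {1}HK cover_sum.
rewrite exchange_big; apply: eq_bigr => S _; by rewrite coefE card_sum.
Qed.

Lemma inK_lc (K : {group gT}) s t : (s^-1 * t \in K) = (s \in t *: K).
Proof. by rewrite mem_lcoset -groupV invMg invgK. Qed.

Lemma coefK2 (K : {group gT}) (T : {set gT}) (x y : gT) : is_Asubgroup P K -> T \in P -> x \in T -> y \in T ->
  #|T :&: x *: K| = #|T :&: y *: K|.
Proof.
move=> HK TP xT yT.
have E z : T :&: z *: K = [set t in T | t^-1 * z \in K].
  by apply/setP => t; rewrite !inE inK_lc.
by rewrite !E; apply: coefK.
Qed.

Lemma part_card (K : {group gT}) (T : {set gT}) (t : gT) : is_Asubgroup P K -> T \in P -> t \in T ->
  #|T| = (#|preim_partition (fun y => y *: K) T| * #|T :&: t *: K|)%N.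
Proof.
move=> HK TP tT.
rewrite (card_partition (preim_partitionP (fun y => y *: K) T)) -sum_nat_const.
apply: eq_bigr => B /imsetP[x xT ->].
rewrite -(coefK2 HK TP xT tT) /=; apply: eq_card => y; rewrite !inE.
case: (y \in T) => //=; rewrite eq_sym; apply/eqP/idP.
- by move=> E; rewrite -E lcoset_refl.
- by move/lcoset_eqP ->.
Qed.

Lemma thin_shift (a : gT) (S : {set gT}) : [set a] \in P -> S \in P -> a *: S \in P.
Proof.
move=> aP SP.
case/set0Pn: (sr_n0 SP) => y yS.
have aH : a \in H by apply: (subsetP (sr_sub aP)); rewrite set11.
have yH : y \in H by apply: (subsetP (sr_sub SP)).
have cP : cover P = H by case/and3P: sr_part => /eqP.
have ayc : a * y \in cover P by rewrite cP groupM.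
have U_P : pblock P (a * y) \in P by exact: pblock_mem.
have ayU : a * y \in pblock P (a * y) by rewrite mem_pblock.
have pos (b : gT) (V : {set gT}) z : (0 < prod_coef [set b] V z) = (b^-1 * z \in V).
  rewrite coefE card_gt0; apply/set0Pn/idP.
  - by case=> u; rewrite !inE => /andP[/eqP -> ].
  - by move=> h; exists b; rewrite !inE eqxx h.
have [_ _ Pinv C] := sr.
have aiP : [set a^-1] \in P.
  by have := Pinv _ aP; rewrite /set_inv imset_set1.
suff -> : a *: S = pblock P (a * y) by [].
apply/eqP; rewrite eqEsubset; apply/andP; split; apply/subsetP => z.
- rewrite mem_lcoset => zS.
  have := C _ _ _ _ _ aiP U_P SP zS yS.
  move/(congr1 (fun n => 0 < n)); rewrite !pos !invgK mulKVg => ->.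
  exact: ayU.
- move=> zU.
  have := C _ _ _ _ _ aP SP U_P zU ayU.
  by move/(congr1 (fun n => 0 < n)); rewrite !pos mulKg mem_lcoset => ->.
Qed.

Lemma lcoset_set1 (a b : gT) : a *: [set b] = [set a * b].
Proof.
apply/setP => z; rewrite mem_lcoset !inE; apply/eqP/eqP.
- by move=> <-; rewrite mulKVg.
- by move=> ->; rewrite mulKg.
Qed.

Lemma in_Asub (K T : {set gT}) y : is_Asubgroup P K -> T \in P -> y \in T -> y \in K ->
  T \subset K.
Proof.
move=> HK TP yT yK; move: yK; rewrite {1}HK /cover => /bigcupP[S]; rewrite inE => /andP[SP SK] yS.
by rewrite (sr_same TP SP yT yS).
Qed.
End Aux.

Lemma abel_comm (gT : finGroupType) (H : {group gT}) a b :
  abelian H -> a \in H -> b \in H -> commute a b.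
Proof. by move=> abH aH bH; apply: (centsP abH). Qed.

Theorem lemma2p18 (p : nat) (gT : finGroupType) (H : {group gT})
  (P : {set {set gT}}) (K : {group gT}) (T : {set gT}) :
  is_pSring p H P ->
  K \subset H -> #|H : K| = p -> is_Asubgroup P K ->
  T \in P ->
  [/\ (exists2 x, x \in H & T \subset x *: K) /\ rad H T \subset K,
      forall L : {group gT},
        L \subset H -> #|L| = p -> is_Asubgroup P L -> L <| H ->
        ~~ (L \subset rad H T) ->
        forall h, h \in T ->
          (h *: L) :&: T = [set h] /\ (L :* h) :&: T = [set h]
    & abelian H ->
      #|H| %/ p < #|thin_rad H P :&: K| * #|T| ->
      thin_rad H P :&: rad H T != 1 ].
Proof.
move=> [pr pH sr pT] KH iK HK TP.
have /set0Pn [t tT] := sr_n0 sr TP.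
have TH := sr_sub sr TP.
have part1 : exists2 x, x \in H & T \subset x *: K.
  case: (boolP (T \subset K)) => TK.
    by exists 1; [exact: group1 | rewrite lcoset1].
  exists t; first exact: (subsetP TH).
  have Ecard := part_card sr HK TP tT.
  set Q := preim_partition _ T in Ecard.
  have Qp : p.-nat #|Q| by apply: pnat_dvd (pT _ TP); rewrite Ecard dvdn_mulr.
  have Qlt : #|Q| < p.
    have QE : Q = (fun C => [set y in T | C == y *: K]) @: ((fun x => x *: K) @: T).
      by rewrite -imset_comp.
    rewrite QE; apply: leq_ltn_trans (leq_imset_card _ _) _.
    rewrite -iK -card_lcosets; apply: proper_card; apply/properP; split.
      apply/subsetP => C /imsetP[y yT ->]; apply/lcosetsP; exists y => //.
      exact: (subsetP TH).
    exists (K : {set gT}); first by apply/lcosetsP; exists 1; rewrite ?group1 ?lcoset1.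
    apply/imsetP => [[y yT yE]].
    have yK : y \in K by rewrite yE lcoset_refl.
    by rewrite (in_Asub sr HK TP yT yK) in TK.
  have Q1 : #|Q| = 1%N.
    case/p_natP: Qp Qlt => [[|k] ->] //.
    by rewrite expnS ltnNge leq_pmulr // expn_gt0 prime_gt0.
  rewrite Q1 mul1n in Ecard.
  have E : T :&: t *: K == T by rewrite eqEcard subsetIl -Ecard leqnn.
  by rewrite -(eqP E) subsetIr.
split.
- split=> //.
  apply/subsetP => h; rewrite inE => /andP[hH /andP[_ /eqP Th]].
  case: part1 => x xH Tx.
  have thT : t * h \in T by rewrite -{1}Th mem_rcoset mulgK.
  have tK := subsetP Tx _ tT; have thK := subsetP Tx _ thT.
  rewrite mem_lcoset in tK; rewrite mem_lcoset in thK.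
  have -> : h = (x^-1 * t)^-1 * (x^-1 * (t * h)).
    by rewrite invMg invgK mulgA mulgK mulKg.
  by rewrite groupM ?groupV.
- move=> L LH cL HL nLH nLrad h hT.
  have Ln : H \subset 'N(L) by case/andP: nLH.
  have hH : h \in H := subsetP TH _ hT.
  set b := #|T :&: h *: L|.
  have bp : p.-nat b.
    by apply: pnat_dvd (pT _ TP); rewrite (part_card sr HL TP hT) dvdn_mull.
  have ble : b <= p by rewrite -cL -(card_lcoset L h) subset_leq_card // subsetIr.
  have hin : h \in T :&: h *: L by rewrite inE hT lcoset_refl.
  have b1 : b = 1%N.
    case/p_natP: bp ble => k bk; move: bk; case: k => [|[|k]] bk; first by rewrite bk.
    + move=> _; exfalso.
      have full y : y \in T -> y *: L \subset T.
        move=> yT.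
        have cy : #|T :&: y *: L| = p by rewrite (coefK2 sr HL TP yT hT) -/b bk expn1.
        have : T :&: y *: L == y *: L by rewrite eqEcard subsetIr card_lcoset cL cy leqnn.
        by move/eqP <-; exact: subsetIl.
      case/negP: nLrad; apply/subsetP => l lL.
      have lH := subsetP LH _ lL.
      rewrite inE lH /=.
      have sub1 : T :* l \subset T.
        apply/subsetP => z; rewrite mem_rcoset => zT.
        apply: (subsetP (full _ zT)); by rewrite mem_lcoset invMg invgK mulgKV.
      have sub2 : l *: T \subset T.
        apply/subsetP => z; rewrite mem_lcoset => zT.
        have zH : z \in H.
          have -> : z = l * (l^-1 * z) by rewrite mulKVg.
          by rewrite groupM // (subsetP TH).
        apply: (subsetP (full _ zT)).
        rewrite mem_lcoset invMg invgK -mulgA -conjgE memJ_norm //.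
        exact: (subsetP Ln).
      rewrite eqEcard sub2 card_lcoset leqnn /=.
      by rewrite eqEcard sub1 card_rcoset leqnn.
    + rewrite bk => le; exfalso.
      have := ltn_exp2l 1 k.+2 (prime_gt1 pr).
      by rewrite expn1 ltnNge le.
  have E : T :&: h *: L = [set h].
    apply/eqP; rewrite eq_sym eqEcard sub1set hin cards1 -/b b1 leqnn //.
  by rewrite norm_rlcoset ?(subsetP Ln) // setIC E.
- move=> abH lt; apply/negP => /eqP O1.
  case: part1 => x xH Tx.
  set O' := thin_rad H P :&: K.
  have thinP g : g \in O' -> [/\ [set g] \in P, g \in H & g \in K].
    by rewrite !inE => /andP[/andP[gH gP] gK]; split.
  have FP g : g \in O' -> g *: T \in P.
    by case/thinP => gP _ _; exact: (thin_shift sr gP TP).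
  have FS g : g \in O' -> g *: T \subset x *: K.
    case/thinP => _ gH gK; apply/subsetP => z; rewrite mem_lcoset => /(subsetP Tx).
    rewrite !mem_lcoset => zK.
    have -> : x^-1 * z = g * (x^-1 * (g^-1 * z)).
      by rewrite mulgA (abel_comm abH gH (groupVr xH)) -mulgA mulKVg.
    by rewrite groupM.
  have Finj : {in O' &, injective (fun g => g *: T)}.
    move=> g g' gO g'O /= E.
    have [gP gH _] := thinP _ gO; have [g'P g'H _] := thinP _ g'O.
    set u := g'^-1 * g.
    have uH : u \in H by rewrite groupM ?groupV.
    have uT : u *: T = T by rewrite lcosetM E -lcosetM mulVg lcoset1.
    have Tu : T :* u = u *: T.
      rewrite -rcosetE -lcosetE /rcoset /lcoset; apply: eq_in_imset => y yT.
      exact: (abel_comm abH (subsetP TH _ yT) uH).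
    have g'iP : [set g'^-1] \in P.
      by have [_ _ Pinv _] := sr; have := Pinv _ g'P; rewrite /set_inv imset_set1.
    have uP : [set u] \in P by rewrite -lcoset_set1; exact: (thin_shift sr g'iP gP).
    have : u \in thin_rad H P :&: rad H T.
      by rewrite !inE uH uP /= Tu uT eqxx.
    rewrite O1 inE => /eqP u1.
    by apply: (mulgI g'^-1); rewrite -/u u1 mulVg.
  set Q := (fun g => g *: T) @: O'.
  have tQ : trivIset Q.
    apply: trivIsetS (sr_triv sr); apply/subsetP => B /imsetP[g gO ->]; exact: FP.
  have n0 : set0 \notin Q.
    apply/imsetP => [[g gO E]]; by move: (sr_n0 sr (FP _ gO)); rewrite -E eqxx.
  have pQ : partition Q (cover Q) by rewrite /partition eqxx tQ n0.
  have cQ := card_partition pQ.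
  have : #|cover Q| <= #|K|.
    rewrite -(card_lcoset K x); apply: subset_leq_card.
    apply/bigcupsP => B /imsetP[g gO ->]; exact: FS.
  rewrite cQ (eq_bigr (fun _ => #|T|)); last first.
    by move=> B /imsetP[g gO ->]; rewrite card_lcoset.
  rewrite sum_nat_const card_in_imset // => le.
  move: lt; rewrite -iK (divg_indexS KH) ltnNge.
  by rewrite le.
Qed.
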